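(* Let $X$ be a compact Hausdorff space, $\mathcal C=C(X)$, $\alpha\colon X\to X$ continuous, $\delta f=f\circ\alpha$, $A$ a transfer operator for $(\mathcal C,\delta)$. Fix $\mu\in M_\delta(\mathcal C)$, $n\in\mathbb N$ and a partition of unity $D$. Let $(m_k)\subset M(\mathcal C)$ be a sequence with $\sum_{g\in D}\mu[g]\ln\frac{m_k[A^ng]}{\mu[g]}\to\tau_n(\mu,D)$, and let $(m_{k_i})$ be a subsequence for which the limits $C_n(\mu,g,D):=\lim_{i\to\infty}m_{k_i}[A^ng]$ exist for all $g\in D$. If $\tau_n(\mu,D)>-\infty$, then \[ \sup_{m\in M(\mathcal C)}\ \sum_{g\in D,\ \mu[g]>0}\mu[g]\,\frac{m[A^ng]}{C_n(\mu,g,D)}=1. \]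
   Context: A transfer operator for $(\mathcal C,\delta)$ is a positive linear operator $A\colon\mathcal C\to\mathcal C$ with $A((\delta f)g)=f\,Ag$ for all $f,g\in\mathcal C$. $M(\mathcal C)$ is the set of positive linear functionals $m$ on $\mathcal C$ with $m[\mathbf 1]=1$ ($\mathbf 1$ the constant $1$); $M_\delta(\mathcal C)$ those also satisfying $\mu[\delta f]=\mu[f]$ for all $f$. A partition of unity is a finite set $D$ of nonnegative elements of $\mathcal C$ summing to $\mathbf 1$. $\tau_n(\mu,D)=\sup_{m\in M(\mathcal C)}\sum_{g\in D}\mu[g]\ln\frac{m[A^ng]}{\mu[g]}$, where summands with $\mu[g]=0$ are set to $0$ and $\ln0=-\infty$. *)

(* Defs.v *)
From HB Require Import structures.
From mathcomp Require Import all_boot all_order all_algebra.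
From mathcomp Require Import all_classical all_reals all_analysis.
Set Implicit Arguments. Unset Strict Implicit. Unset Printing Implicit Defensive.
Import Order.TTheory GRing.Theory Num.Theory.
Import numFieldNormedType.Exports.
Local Open Scope ring_scope.

(* C(X) is represented by the continuous functions X -> R; functionals and
   operators are functions on all of X -> R, but every hypothesis is only
   imposed on continuous functions, so only their restriction to C(X) matters. *)

Section Defs.
Context {R : realType} {X : topologicalType}.

Definition cont (f : X -> R) : Prop := continuous f.

Definition pos_lin_functional (m : (X -> R) -> R) : Prop :=
  [/\ (forall f g, cont f -> cont g -> m (f \+ g) = m f + m g),
      (forall (c : R) f, cont f -> m (fun x => c * f x) = c * m f) &
      (forall f, cont f -> (forall x, 0 <= f x) -> 0 <= m f)].

Definition in_M (m : (X -> R) -> R) : Prop :=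
  pos_lin_functional m /\ m (fun _ => 1) = 1.

Definition in_Mdelta (alpha : X -> X) (mu : (X -> R) -> R) : Prop :=
  in_M mu /\ forall f, cont f -> mu (f \o alpha) = mu f.

Definition transfer_operator (alpha : X -> X) (A : (X -> R) -> (X -> R)) : Prop :=
  [/\ (forall f, cont f -> cont (A f)),
      (forall f g, cont f -> cont g -> A (f \+ g) = A f \+ A g),
      (forall (c : R) f, cont f -> A (fun x => c * f x) = (fun x => c * A f x)),
      (forall f, cont f -> (forall x, 0 <= f x) -> forall x, 0 <= A f x) &
      (forall f g, cont f -> cont g ->
         A (fun x => (f \o alpha) x * g x) = (fun x => f x * A g x))].

Definition partition_of_unity (N : nat) (g : 'I_N -> X -> R) : Prop :=
  [/\ injective g,
      (forall i, cont (g i)),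
      (forall i x, 0 <= g i x) &
      (forall x, \sum_(i < N) g i x = 1)].

Local Open Scope ereal_scope.

(* summand mu[g] ln (m[A^n g] / mu[g]), set to 0 when mu[g] = 0, ln 0 = -oo *)
Definition tau_term (a b : R) : \bar R :=
  if a == 0%R then 0
  else if b == 0%R then -oo
  else (a * ln (b / a))%:E.

Definition tau_sum (A : (X -> R) -> (X -> R)) (mu m : (X -> R) -> R) (n : nat)
    (N : nat) (g : 'I_N -> X -> R) : \bar R :=
  \sum_(i < N) tau_term (mu (g i)) (m (iter n A (g i))).

Definition tau (A : (X -> R) -> (X -> R)) (mu : (X -> R) -> R) (n : nat)
    (N : nat) (g : 'I_N -> X -> R) : \bar R :=
  ereal_sup [set tau_sum A mu m n g | m in in_M].

End Defs.

(* Main.v *)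
Require Import Defs.
From HB Require Import structures.
From mathcomp Require Import all_boot all_order all_algebra.
From mathcomp Require Import all_classical all_reals all_analysis.
From mathcomp Require Import ring lra.
Import Order.TTheory GRing.Theory Num.Theory.
Import numFieldNormedType.Exports.
Local Open Scope classical_set_scope.
Local Open Scope ring_scope.

Section HH.
Context {R : realType}.

Lemma ln_le_sub1 (x : R) : 0 < x -> ln x <= x - 1.
Proof.
move=> x0; have h := @le_ln1Dx R (x - 1).
have e : 1 + (x - 1) = x by ring.
rewrite e in h; apply: h; lra.
Qed.

Lemma ln_ge_1inv (x : R) : 0 < x -> 1 - x^-1 <= ln x.
Proof.
move=> x0; have := @ln_le_sub1 x^-1; rewrite invr_gt0 => /(_ x0).
rewrite lnV ?posrE //; lra.
Qed.

Lemma key_ineq (a C b t : R) : 0 < a -> 0 < C -> 0 <= b -> 0 < t -> t <= 1/2 ->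
  t * (a * (b / C) - a) - t ^+ 2 * (2 * a * (b - C) ^+ 2 / C ^+ 2)
  <= a * ln (((1 - t) * C + t * b) / a) - a * ln (C / a).
Proof.
move=> a0 C0 b0 t0 th.
set y := (1 - t) * C + t * b.
have y0 : 0 < y by rewrite /y; nra.
have hy : C <= 2 * y by rewrite /y; nra.
rewrite -mulrBr ln_div ?posrE // ln_div ?posrE // opprB addrA subrK.
have := @ln_ge_1inv (y / C) (divr_gt0 y0 C0); rewrite ln_div ?posrE // => hl.
apply: le_trans (ler_wpM2l (ltW a0) hl).
set d := b - C.
have -> : y = C + t * d by rewrite /y /d; ring.
have hy' : 0 < C + t * d by rewrite /d; nra.
have -> : 1 - ((C + t * d) / C)^-1 = t * d / (C + t * d).
  by field; rewrite ?gt_eqF.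
have -> : a * (b / C) - a = a * d / C by rewrite /d; field; rewrite gt_eqF.
rewrite -subr_ge0.
have -> : a * (t * d / (C + t * d)) - (t * (a * d / C) - t ^+ 2 * (2 * a * d ^+ 2 / C ^+ 2))
   = a * t ^+ 2 * d ^+ 2 * (C + 2 * t * d) / (C ^+ 2 * (C + t * d)).
  by field; rewrite ?gt_eqF.
apply: divr_ge0; last by apply: mulr_ge0; [apply: sqr_ge0|apply: ltW].
apply: mulr_ge0; first by apply: mulr_ge0; [apply: mulr_ge0; [apply: ltW|apply: sqr_ge0]|apply: sqr_ge0].
rewrite /d; nra.
Qed.

Lemma small_le0 (x K : R) : 0 <= K -> (forall t, 0 < t -> t <= 1/2 -> x <= t * K) -> x <= 0.
Proof.
move=> K0 H; rewrite leNgt; apply/negP => x0.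
have t0 : 0 < x / (2 * (K + x)) by apply: divr_gt0 => //; nra.
have := H _ t0.
have hKx : 0 < K + x by lra.
have th : x / (2 * (K + x)) <= 1/2.
  by rewrite ler_pdivrMr ?mulr_gt0 //; nra.
move=> /(_ th); rewrite mulrC mulrA ler_pdivlMr ?mulr_gt0 //; nra.
Qed.
End HH.
Section LL.
Context {R : realType}.

Lemma tau_sum_eq (N : nat) (a b : 'I_N -> R) : (forall i, 0 <= a i) ->
  (forall i, 0 < a i -> 0 < b i) ->
  (\sum_(i < N) tau_term (a i) (b i) = (\sum_(i < N | 0 < a i) a i * ln (b i / a i))%:E)%E.
Proof.
move=> a0 hb; rewrite -sumEFin [in RHS]big_mkcond /=; apply: eq_bigr => i _.
rewrite /tau_term; case: ltP => ai.
  by rewrite gt_eqF // gt_eqF // hb.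
have -> : a i = 0 by apply: le_anti; rewrite ai a0.
by rewrite eqxx.
Qed.

Lemma cvg_tau (N : nat) (a : 'I_N -> R) (b : nat -> 'I_N -> R) (c : 'I_N -> R) :
  (forall i, 0 <= a i) -> (forall i, (fun j => b j i) @ \oo --> c i) ->
  (forall i, 0 < a i -> 0 < c i) ->
  (fun j => \sum_(i < N) tau_term (a i) (b j i))%E @ \oo -->
     (\sum_(i < N | 0 < a i) a i * ln (c i / a i))%:E.
Proof.
move=> a0 hb hc.
have ev : \forall j \near \oo, forall i, 0 < a i -> 0 < b j i.
  apply: filter_forall => i; case: (ltP 0 (a i)) => ai.
    by apply: filterS (cvgr_gt _ (hb i) 0 (hc i ai)) => j h _.
  by apply: nearW => j h; exfalso; lra.
have X : (fun j => \sum_(i < N | 0 < a i) a i * ln (b j i / a i)) @ \oo -->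
     \sum_(i < N | 0 < a i) a i * ln (c i / a i).
  apply: (@cvg_big _ _ +%R 0 _ add_continuous) => i ai.
  apply: cvgMl_tmp.
  have h1 : (fun j => b j i / a i) @ \oo --> c i / a i by exact: cvgMr_tmp.
  have h2 : 0 < c i / a i by apply: divr_gt0; [exact: hc|].
  exact: (cvg_comp _ _ h1 (continuous_ln h2)).
apply/fine_cvgP; split.
  by near=> j; rewrite tau_sum_eq //; near: j.
apply: cvg_trans X; apply: near_eq_cvg; near=> j.
by rewrite /= tau_sum_eq //; near: j.
Unshelve. all: by end_near.
Qed.

End LL.

Section FF.
Context {R : realType} {X : topologicalType}.

Lemma iter_prop (alpha : X -> X) (A : (X -> R) -> (X -> R))
  (hA : transfer_operator alpha A) n f : cont f -> (forall x, 0 <= f x) ->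
  cont (iter n A f) /\ forall x, 0 <= iter n A f x.
Proof.
case: hA => hc _ _ hp _ cf pf; elim: n => [|n [IHc IHp]] /=; first by split.
by split; [exact: hc | exact: hp].
Qed.

Lemma PL_ge0 (m : (X -> R) -> R) f : pos_lin_functional m -> cont f ->
  (forall x, 0 <= f x) -> 0 <= m f.
Proof. by case=> _ _ hp; exact: hp. Qed.

Lemma M_mix (m1 m2 : (X -> R) -> R) (t : R) : in_M m1 -> in_M m2 -> 0 <= t <= 1 ->
  in_M (fun f => (1 - t) * m1 f + t * m2 f).
Proof.
move=> [[a1 s1 p1] n1] [[a2 s2 p2] n2] /andP[t0 t1]; split; last first.
  by rewrite n1 n2; ring.
split.
- by move=> f g cf cg; rewrite a1 // a2 //; ring.
- by move=> c f cf; rewrite s1 // s2 //; ring.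
- move=> f cf pf; apply: addr_ge0; apply: mulr_ge0.
  + by rewrite subr_ge0.
  + exact: p1.
  + by [].
  + exact: p2.
Qed.

Lemma M_sum (m : (X -> R) -> R) (hm : pos_lin_functional m) (I : Type) (s : seq I)
  (f : I -> X -> R) : (forall i, cont (f i)) ->
  cont (fun x => \sum_(i <- s) f i x) /\
  m (fun x => \sum_(i <- s) f i x) = \sum_(i <- s) m (f i).
Proof.
case: hm => ha hs hp hf; elim: s => [|i s [IHc IHm]].
  have -> : (fun x => \sum_(i <- [::]) f i x) = (fun x => 0 * (fun _ : X => (1 : R)) x).
    by apply: funext => x; rewrite big_nil mul0r.
  split; first by move=> x; apply: cst_continuous.
  by rewrite hs; [rewrite mul0r big_nil | move=> x; apply: cst_continuous].
have -> : (fun x => \sum_(j <- i :: s) f j x) = f i \+ (fun x => \sum_(j <- s) f j x).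
  by apply: funext => x; rewrite big_cons.
split; last by rewrite ha // IHm big_cons.
by move=> x; apply: continuousD; [exact: hf | exact: IHc].
Qed.

End FF.

Lemma lim_ge {R : realType} (u : nat -> R) l x : u @ \oo --> l ->
  (\forall j \near \oo, x <= u j) -> x <= l.
Proof.
move=> h H; rewrite leNgt; apply/negP => lx.
have H2 : \forall t \near \oo, u t < x by exact: cvgr_lt h x lx.
have [j [h1 h2]] := filter_ex (filterI H H2).
lra.
Qed.

Lemma lim_le_e {R : realType} (u : nat -> \bar R) l x : u @ \oo --> l ->
  (forall j, (u j <= x)%E) -> (l <= x)%E.
Proof.
move=> h H; rewrite leNgt; apply/negP => lx.
have H2 : \forall j \near \oo, (x < u j)%E := h _ (open_ereal_gt' lx).
have [j /= h1] := filter_ex H2.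
by have := H j; rewrite leNgt h1.
Qed.

Lemma tau_term_le {R : realType} (a b : R) : 0 <= a -> 0 <= b ->
  (tau_term a b <= (b - a)%:E)%E.
Proof.
move=> a0 b0; rewrite /tau_term; case: eqP => [->|an0].
  by rewrite lee_fin subr0.
case: eqP => [_|bn0]; first by rewrite leNye.
have ap : 0 < a by rewrite lt_neqAle a0 andbT; apply/eqP => e; apply: an0.
have bp : 0 < b by rewrite lt_neqAle b0 andbT; apply/eqP => e; apply: bn0.
rewrite lee_fin.
have := @ln_le_sub1 R (b / a) (divr_gt0 bp ap).
move=> hl; apply: le_trans (ler_wpM2l a0 hl) _.
by rewrite mulrBr mulr1 mulrCA divff ?mulr1 // lt0r_neq0.
Qed.

Theorem lemma1p13 (R : realType) (X : topologicalType)
  (hX : hausdorff_space X) (cX : compact [set: X])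
  (alpha : X -> X) (calpha : continuous alpha)
  (A : (X -> R) -> (X -> R)) (hA : transfer_operator alpha A)
  (mu : (X -> R) -> R) (hmu : in_Mdelta alpha mu)
  (n : nat) (N : nat) (g : 'I_N -> X -> R) (hD : partition_of_unity g)
  (m : nat -> (X -> R) -> R) (hm : forall k, in_M (m k))
  (hmconv : (fun k => tau_sum A mu (m k) n g) @ \oo --> tau A mu n g)
  (phi : nat -> nat) (hphi : {homo phi : a b / (a < b)%N})
  (C : 'I_N -> R)
  (hC : forall i, (fun j => m (phi j) (iter n A (g i))) @ \oo --> C i)
  (htau : (-oo < tau A mu n g)%E) :
  ereal_sup [set ((\sum_(i < N | 0 < mu (g i)) mu (g i) * (m' (iter n A (g i)) / C i))%:E)%E
            | m' in in_M] = 1%:E.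
Proof.
case: (hmu) => [[hmul hmu1] _].
case: hD => [_ hgc hgp hgs].
set a := fun i => mu (g i).
have ha0 : forall i, 0 <= a i by move=> i; exact: PL_ge0 hmul (hgc i) (hgp i).
have hAn : forall i, cont (iter n A (g i)) /\ forall x, 0 <= iter n A (g i) x.
  by move=> i; exact: (@iter_prop _ _ alpha A hA n _ (hgc i) (hgp i)).
have hb0 : forall m', in_M m' -> forall i, 0 <= m' (iter n A (g i)).
  by move=> m' [hm' _] i; apply: PL_ge0 hm' _ _; case: (hAn i).
have hsa : \sum_(i < N | 0 < a i) a i = 1.
  have hs1 : \sum_(i < N) a i = 1.
    have [_ <-] := @M_sum R X mu hmul _ (index_enum 'I_N) g hgc.
    rewrite -hmu1; congr (mu _); apply: funext => x; exact: hgs.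
  rewrite -hs1 [in RHS](bigID (fun i => 0 < a i)) /=.
  rewrite [X in _ = _ + X]big1 ?addr0 // => i.
  by rewrite -leNgt => ai; apply: le_anti; rewrite ai ha0.
have hsub : (fun j => tau_sum A mu (m (phi j)) n g) @ \oo --> tau A mu n g.
  have hge : forall j, (j <= phi j)%N.
    elim => [|j IH] //; exact: leq_ltn_trans IH (hphi _ _ (ltnSn j)).
  have phioo : phi @ \oo --> \oo.
    apply/cvgnyPge => M; near=> j; apply: leq_trans (hge j); near: j.
    exact: nbhs_infty_ge.
  exact: (cvg_comp _ _ phioo hmconv).
have Cpos : forall i, 0 < a i -> 0 < C i.
  have [r hr] : exists r : R, (r%:E < tau A mu n g)%E.
    move: htau; case: (tau A mu n g) => [t| |] // _.
      by exists (t - 1); rewrite lte_fin; lra.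
    by exists 0; exact: ltry.
  have ev1 : \forall j \near \oo, (r%:E < tau_sum A mu (m (phi j)) n g)%E.
    exact: hsub _ (open_ereal_gt' hr).
  have ev2 : \forall j \near \oo,
      \sum_(i < N) m (phi j) (iter n A (g i)) < \sum_(i < N) C i + 1.
    apply: (cvgr_lt (\sum_(i < N) C i)); last by lra.
    by apply: (@cvg_big _ _ +%R 0 _ add_continuous) => i _; exact: hC.
  move=> i0 ai0.
  set B := \sum_(i < N) C i + 1.
  set r' := r - B.
  apply: (@lt_le_trans _ _ (a i0 * expR (r' / a i0))).
    by apply: mulr_gt0 => //; exact: expR_gt0.
  apply: lim_ge (hC i0) _.
  near=> j.
  have h1 : (r%:E < tau_sum A mu (m (phi j)) n g)%E by near: j.
  have h2 : \sum_(i < N) m (phi j) (iter n A (g i)) < B by near: j.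
  set bb := fun i => m (phi j) (iter n A (g i)).
  have hbb : forall i, 0 <= bb i by move=> i; exact: hb0.
  rewrite /tau_sum (bigD1 i0) //= in h1.
  have h3 : (\sum_(i < N | i != i0) tau_term (a i) (bb i) <=
             (\sum_(i < N | i != i0) (bb i - a i))%:E)%E.
    by rewrite -sumEFin; apply: lee_sum => i _; exact: tau_term_le.
  have h4 : \sum_(i < N | i != i0) (bb i - a i) <= B.
    apply: le_trans (ltW h2).
    apply: (@le_trans _ _ (\sum_(i < N | i != i0) bb i)).
      by apply: ler_sum => i _; have := ha0 i; lra.
    rewrite /bb [X in _ <= X](bigD1 i0) //=; have := hbb i0; rewrite /bb; lra.
  have h6 : (r%:E < tau_term (a i0) (bb i0) + B%:E)%E.
    apply: lt_le_trans h1 _; apply: leeD2l; apply: le_trans h3 _.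
    by rewrite lee_fin.
  move: h6; rewrite /tau_term (gt_eqF ai0); case: eqP => [_|bn0].
    by rewrite addNye.
  have bp : 0 < bb i0 by rewrite lt_neqAle hbb andbT; apply/eqP => e; apply: bn0.
  rewrite -EFinD lte_fin => h6.
  have hl : r' / a i0 < ln (bb i0 / a i0).
    have e : r' / a i0 * a i0 = r' by rewrite divfK // lt0r_neq0.
    rewrite -(ltr_pM2r ai0) e /r'; lra.
  have hq : 0 < bb i0 / a i0 by exact: divr_gt0.
  move: hl; rewrite -ltr_expR lnK ?posrE // => hl2; apply: ltW.
  have e2 : a i0 * (bb i0 / a i0) = bb i0 by rewrite mulrCA divff ?mulr1 // lt0r_neq0.
  by rewrite /bb in e2 *; rewrite -e2 ltr_pM2l.
set L := \sum_(i < N | 0 < a i) a i * ln (C i / a i).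
have Lval : tau A mu n g = L%:E.
  have h := @cvg_tau R N a (fun j i => m (phi j) (iter n A (g i))) C ha0 hC Cpos.
  exact: (cvg_unique _ hsub h).
have Upper : forall m', in_M m' ->
    \sum_(i < N | 0 < a i) a i * (m' (iter n A (g i)) / C i) <= 1.
  move=> m' hm'.
  set b' := fun i => m' (iter n A (g i)).
  set S := \sum_(i < N | 0 < a i) a i * (b' i / C i).
  set K := \sum_(i < N | 0 < a i) 2 * a i * (b' i - C i) ^+ 2 / C i ^+ 2.
  have K0 : 0 <= K.
    apply: sumr_ge0 => i ai; apply: divr_ge0; last exact: sqr_ge0.
    apply: mulr_ge0; last exact: sqr_ge0.
    by apply: mulr_ge0 => //; exact: ha0.
  rewrite -subr_le0; apply: (@small_le0 _ _ K K0) => t t0 th.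
  set y := fun i => (1 - t) * C i + t * b' i.
  have ypos : forall i, 0 < a i -> 0 < y i.
    move=> i ai; have := Cpos i ai; have := hb0 m' hm' i; rewrite /y /b'; nra.
  have hmix : forall j, in_M (fun f => (1 - t) * m (phi j) f + t * m' f).
    by move=> j; apply: M_mix => //; apply/andP; split; lra.
  have conv := @cvg_tau R N a
     (fun j i => (1 - t) * m (phi j) (iter n A (g i)) + t * b' i) y ha0.
  have Fle : \sum_(i < N | 0 < a i) a i * ln (y i / a i) <= L.
    rewrite -lee_fin; apply: lim_le_e (conv _ ypos) _.
      by move=> i; apply: cvgD; [exact: cvgMl_tmp | exact: cvg_cst].
    move=> j; rewrite -Lval; apply: ereal_sup_ubound.
    by exists (fun f => (1 - t) * m (phi j) f + t * m' f).
  have hsum : \sum_(i < N | 0 < a i)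
      (t * (a i * (b' i / C i) - a i) - t ^+ 2 * (2 * a i * (b' i - C i) ^+ 2 / C i ^+ 2))
      <= \sum_(i < N | 0 < a i) (a i * ln (y i / a i) - a i * ln (C i / a i)).
    apply: ler_sum => i ai; apply: key_ineq => //; [exact: Cpos | exact: hb0].
  rewrite sumrB -/L in hsum.
  rewrite sumrB -!mulr_sumr sumrB hsa -/S -/K in hsum.
  rewrite -/L in hsum; nra.
apply: le_anti; apply/andP; split.
  by apply: ge_ereal_sup => _ [m' hm' <-]; rewrite lee_fin; exact: Upper.
set v := fun j => \sum_(i < N | 0 < a i) a i * (m (phi j) (iter n A (g i)) / C i).
have hv : v @ \oo --> (1 : R).
  rewrite -hsa.
  have -> : \sum_(i < N | 0 < a i) a i = \sum_(i < N | 0 < a i) a i * (C i / C i).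
    by apply: eq_bigr => i ai; rewrite divff ?mulr1 // lt0r_neq0 // Cpos.
  apply: (@cvg_big _ _ +%R 0 _ add_continuous) => i ai.
  by apply: cvgMl_tmp; apply: cvgMr_tmp; exact: hC.
apply: (@lim_le_e R (fun j => (v j)%:E)).
  by apply: cvg_EFin; [exact: nearW | exact: hv].
move=> j; apply: ereal_sup_ubound.
by exists (m (phi j)).
Unshelve. all: by end_near.
Qed.
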